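(* Let $C$ be a cycle and $P$ a path (in some graph) such that $C\cup P$ is the exceptional graph. Then $C$ has length $5$, $V(C)\subseteq V(P)$, and the subgraph of $C\cup P$ induced by $V(C)$ is isomorphic to $K_5^-$.
   Context: $K_5^-$ is $K_5$ minus one edge. The exceptional graph is a graph that is the union of an edge-disjoint cycle $C_0$ of length $5$ and path $P_0$ such that $V(C_0)\subseteq V(P_0)$ and $V(C_0)$ induces a $K_5^-$ in $C_0\cup P_0$. ''$C\cup P$ is the exceptional graph'' means that the graph with edge set $E(C)\cup E(P)$ ($C,P$ edge-disjoint) is isomorphic to the exceptional graph. *)

(* Defs.v *)
From mathcomp Require Import all_boot.

Set Implicit Arguments. Unset Strict Implicit. Unset Printing Implicit Defensive.

(* Graphs are given by their edge sets: an edge is a 2-element set {x,y} of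
   vertices of an ambient finite vertex type T. *)
Section Graphs.
Variable T : finType.

Definition pedges (s : seq T) : {set {set T}} :=
  [set [set pq.1; pq.2] | pq in zip s (behead s)].

Definition cedges (s : seq T) : {set {set T}} := pedges (s ++ take 1 s).

Definition is_path (s : seq T) : bool := uniq s && (0 < size s).

(* A cycle: at least 3 distinct vertices, closed up. Its length is size s. *)
Definition is_cycle (s : seq T) : bool := uniq s && (2 < size s).

Definition induces_K5minus (V : {set T}) (E : {set {set T}}) : Prop :=
  #|V| = 5 /\
  exists u v, [/\ u \in V, v \in V, u != v &
    [set e in E | e \subset V] =
    [set e : {set T} | [&& e \subset V, #|e| == 2 & e != [set u; v]]]].

Definition exceptional (E : {set {set T}}) : Prop :=
  exists c0 p0 : seq T,
    [/\ is_cycle c0 /\ size c0 = 5, is_path p0,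
        [disjoint cedges c0 & pedges p0],
        E = cedges c0 :|: pedges p0 &
        {subset c0 <= p0} /\ induces_K5minus [set x in c0] E].

End Graphs.

(* Main.v *)
Require Import Defs.
From mathcomp Require Import all_boot.
From mathcomp Require Import zify.
Set Implicit Arguments. Unset Strict Implicit. Unset Printing Implicit Defensive.

Section S.
Variable T : finType.
Implicit Types (s c p : seq T) (x y a b : T).

Lemma set2_eq x y a b : [set x; y] = [set a; b] -> (a = x /\ b = y) \/ (a = y /\ b = x).
Proof.
move=> e.
have ha : a \in [set x; y] by rewrite e !inE eqxx.
have hb : b \in [set x; y] by rewrite e !inE eqxx orbT.
have hx : x \in [set a; b] by rewrite -e !inE eqxx.
have hy : y \in [set a; b] by rewrite -e !inE eqxx orbT.
by move: ha hb hx hy; rewrite !inE => /orP[]/eqP-> /orP[]/eqP-> /orP[]/eqP ? /orP[]/eqP ?; subst; auto.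
Qed.

Lemma uz1 (z : seq (T * T)) x y1 y2 :
  uniq (unzip1 z) -> (x, y1) \in z -> (x, y2) \in z -> y1 = y2.
Proof.
elim: z => [|[a b] z IH] //= /andP[an uz].
have nz y : ((a, y) \in z) = false.
  by apply/negP => /(map_f fst) /=; rewrite (negbTE an).
rewrite !inE; case: (x =P a) => [->|nxa].
  by rewrite !nz !orbF => /eqP[->] /eqP[->].
have ne y : ((x, y) == (a, b)) = false by apply/negP => /eqP[].
by rewrite !ne /=; apply: IH.
Qed.

Lemma uz2 (z : seq (T * T)) x y1 y2 :
  uniq (unzip2 z) -> (y1, x) \in z -> (y2, x) \in z -> y1 = y2.
Proof.
elim: z => [|[a b] z IH] //= /andP[an uz].
have nz y : ((y, b) \in z) = false.
  by apply/negP => /(map_f snd) /=; rewrite (negbTE an).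
rewrite !inE; case: (x =P b) => [->|nxa].
  by rewrite !nz !orbF => /eqP[->] /eqP[->].
have ne y : ((y, x) == (a, b)) = false by apply/negP => /eqP[].
by rewrite !ne /=; apply: IH.
Qed.

Lemma card_nb (z : seq (T * T)) x :
  uniq (unzip1 z) -> uniq (unzip2 z) ->
  #|[set y | [set x; y] \in [set [set pq.1; pq.2] | pq in z]]| <= 2.
Proof.
move=> u1 u2.
have sub : [set y | [set x; y] \in [set [set pq.1; pq.2] | pq in z]] \subset
   [set y | (x, y) \in z] :|: [set y | (y, x) \in z].
  apply/subsetP => y; rewrite !inE => /imsetP[[a b] hz /= e].
  by case: (set2_eq e) => -[? ?]; subst; rewrite hz ?orbT.
apply: (leq_trans (subset_leq_card sub)); apply: (leq_trans (leq_card_setU _ _)).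
have c1 : #|[set y | (x, y) \in z]| <= 1.
  by apply/card_le1_eqP => y1 y2; rewrite !inE => h1 h2; first [exact: (uz1 _ h1 h2) | exact: (esym (uz1 _ h1 h2))].
have c2 : #|[set y | (y, x) \in z]| <= 1.
  by apply/card_le1_eqP => y1 y2; rewrite !inE => h1 h2; first [exact: (uz2 _ h1 h2) | exact: (esym (uz2 _ h1 h2))].
by rewrite -[2]/(1 + 1) leq_add.
Qed.

Lemma unzip1_pre (s t : seq T) : unzip1 (zip s t) = take (size t) s.
Proof. by elim: s t => [|x s IH] [|y t] //=; rewrite IH. Qed.

Lemma unzip2_pre (s t : seq T) : unzip2 (zip s t) = take (size s) t.
Proof. by elim: s t => [|x s IH] [|y t] //=; rewrite IH. Qed.

Lemma pedges_deg s x : uniq s -> #|[set y | [set x; y] \in pedges s]| <= 2.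
Proof.
move=> us; apply: card_nb.
  by rewrite unzip1_pre take_uniq.
rewrite unzip2_pre take_uniq //; by case: s us => //= a s /andP[].
Qed.


End S.

Section S2.
Variable T : finType.
Implicit Types (s c p : seq T) (x y a b : T).

Lemma cedges_deg c x : uniq c -> #|[set y | [set x; y] \in cedges c]| <= 2.
Proof.
case: c => [|a r] uc; apply: card_nb => //.
  by rewrite unzip1_pre /= take0 size_cat /= addn1 /= take_size_cat.
rewrite unzip2_pre /= take0 take_oversize ?size_cat /= ?addn1 //.
by rewrite cats1 rcons_uniq.
Qed.
End S2.

Section S3.
Variable T : finType.
Implicit Types (s c p : seq T) (x y a b : T).

Lemma pedgesP (x0 : T) s e : e \in pedges s ->
  exists k, k.+1 < size s /\ e = [set nth x0 s k; nth x0 s k.+1].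
Proof.
case/imsetP => pq hz ->.
have [k hk <-] := nthP (x0, x0) hz.
exists k; move: hk; rewrite nth_zip_cond => hk; rewrite hk /= nth_behead.
split=> //; move: hk; rewrite size_zip; case: s {hz} => //= a s.
by rewrite minnE subKn ?leqnSn // subSS subn0 => ->.
Qed.

Lemma pedges_vert s e : e \in pedges s -> e \subset [set x in s].
Proof.
case: s => [|x0 s']; first by case/imsetP => pq.
move=> h; have [k [hk ->]] := pedgesP x0 h.
apply/subsetP => z; rewrite in_set2 in_set => /orP[]/eqP->; apply: mem_nth => //.
exact: ltnW.
Qed.

Lemma pedges_idx s a b : uniq s -> [set a; b] \in pedges s ->
  [/\ a \in s, b \in s & ((index a s).+1 = index b s \/ (index b s).+1 = index a s)].
Proof.
case: s => [|x0 s'] us; first by case/imsetP.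
move=> h; have [k [hk e]] := pedgesP x0 h.
have i1 : index (nth x0 (x0 :: s') k) (x0 :: s') = k by rewrite index_uniq // ltnW.
have i2 : index (nth x0 (x0 :: s') k.+1) (x0 :: s') = k.+1 by rewrite index_uniq.
have m1 : nth x0 (x0 :: s') k \in x0 :: s' by rewrite mem_nth // ltnW.
have m2 : nth x0 (x0 :: s') k.+1 \in x0 :: s' by rewrite mem_nth.
by case: (set2_eq e) => -[<- <-]; split => //; [left|right]; rewrite i1 i2.
Qed.

Lemma cedges_vert c e : e \in cedges c -> e \subset [set x in c].
Proof.
move/pedges_vert => /subsetP h; apply/subsetP => z /h; rewrite !inE mem_cat.
by case/orP => // /mem_take.
Qed.

Lemma cedges_nth c (x0 : T) i : i < size c ->
  [set nth x0 c i; nth x0 c (i.+1 %% size c)] \in cedges c.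
Proof.
move=> hi; set c' := c ++ take 1 c.
have sc' : size c' = (size c).+1.
  by rewrite /c'; case: (c) hi => //= a r _; rewrite take0 size_cat /=; lia.
have sz : size (zip c' (behead c')) = size c by rewrite size_zip size_behead sc' /=; lia.
apply/imsetP; exists (nth x0 c' i, nth x0 c' i.+1).
  have -> : (nth x0 c' i, nth x0 c' i.+1) = nth (x0, x0) (zip c' (behead c')) i.
    by rewrite nth_zip_cond sz hi nth_behead.
  by rewrite mem_nth // sz.
rewrite /= /c' nth_cat hi; congr [set _; _].
case: (ltngtP i.+1 (size c)) => h; first by rewrite nth_cat h modn_small.
  by move: h hi; lia.
rewrite nth_cat -h ltnn subnn modnn; by case: (c).
Qed.

Lemma cyc_nb c x : uniq c -> 2 < size c -> x \in c ->
  exists y1 y2, [/\ y1 != y2, [set x; y1] \in cedges c & [set x; y2] \in cedges c].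
Proof.
move=> uc sc xc; set n := size c; set i := index x c.
have hi : i < n by rewrite index_mem.
have hx : nth x c i = x by rewrite nth_index.
set j := if i is 0 then n.-1 else i.-1.
have hj : j < n by rewrite /j; case: (i) hi => [|k] /=; lia.
have ji : j.+1 %% n = i.
  rewrite /j; case: (i) hi => [|k] h /=; first by rewrite prednK ?modnn //; lia.
  by rewrite modn_small.
exists (nth x c (i.+1 %% n)), (nth x c j); split.
- rewrite nth_uniq ?ltn_pmod //; try lia.
  case: (ltngtP i.+1 n) => h.
  + rewrite modn_small // /j; case: (i) h => [|k] /=; lia.
  + lia.
  + rewrite h modnn /j; case: (i) h => [|k] /=; lia.
- by rewrite -{1}hx cedges_nth.
- by rewrite setUC -{2}hx -ji cedges_nth.
Qed.
End S3.

Ltac slia := repeat match goal with H : ?P |- _ =>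
  lazymatch type of P with Prop => clear H end end; lia.

Theorem mainTheorem7 (T : finType) (c p : seq T) :
  is_cycle c -> is_path p -> [disjoint cedges c & pedges p] ->
  exceptional (cedges c :|: pedges p) ->
  [/\ size c = 5, {subset c <= p} &
      induces_K5minus [set x in c] (cedges c :|: pedges p)].
Proof.
move=> /andP[uc sc] /andP[up _] _ [c0 [p0 [[/andP[uc0 _] sc0] /andP[up0 _] _ hE [sub0 hK]]]].
set E := cedges c :|: pedges p in hE hK *.
move: hK; have [V0 eV0] : exists V0, V0 = [set x in c0] by eexists.
rewrite -eV0 => hK.
have hK' := hK; case: hK' => cV0 [u [v [uV vV nuv hI]]].
have V0p0 x : x \in V0 -> x \in p0 by rewrite eV0 inE => /sub0.
have F1 x : x \in V0 -> 2 < #|[set y | [set x; y] \in E]|.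
  move=> xV; set z := if x == u then v else u.
  have sA : (V0 :\ x) :\ z \subset [set y | [set x; y] \in E].
    apply/subsetP => y; rewrite !inE => /and3P[yz yx yV].
    have : [set x; y] \in [set e in E | e \subset V0].
      have xy : x != y by rewrite eq_sym.
      rewrite hI !inE subUset !sub1set xV yV cards2 xy /=.
      apply/eqP => /esym/set2_eq [[e1 e2]|[e1 e2]]; move: yz; rewrite /z -e1 -e2.
        by rewrite !eqxx.
      by rewrite (negbTE xy) eqxx.
    by rewrite inE => /andP[h _]; move: h; rewrite /E inE.
  apply: leq_trans (subset_leq_card sA).
  have := cardsD1 x V0; have := cardsD1 z (V0 :\ x); rewrite xV cV0.
  case: (z \in V0 :\ x); slia.
have F2 x : x \in V0 -> x \in c.
  move=> xV; apply/negPn/negP => xc; have := F1 x xV.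
  suff : [set y | [set x; y] \in E] \subset [set y | [set x; y] \in pedges p].
    by move/subset_leq_card => h1; have := pedges_deg x up; move: h1; slia.
  apply/subsetP => y; rewrite !inE => /orP[/cedges_vert|//].
  by rewrite subUset sub1set inE (negbTE xc).
have F3 x : x \in V0 -> x \in p.
  move=> xV; apply/negPn/negP => xc; have := F1 x xV.
  suff : [set y | [set x; y] \in E] \subset [set y | [set x; y] \in cedges c].
    by move/subset_leq_card => h1; have := cedges_deg x uc; move: h1; slia.
  apply/subsetP => y; rewrite !inE => /orP[//|/pedges_vert].
  by rewrite subUset sub1set inE (negbTE xc).
set I := [set e in pedges p0 | e \subset V0].
have cI : 4 <= #|I|.
  have s1 : [set e in E | e \subset V0] \subset cedges c0 :|: I.
    apply/subsetP => e; rewrite in_set => /andP[h1 h2]; move: h1.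
    rewrite hE !inE => /orP[->//|h1].
    by rewrite h1 h2 orbT.
  have c9 : #|[set e in E | e \subset V0]| = 9.
    rewrite hI.
    have -> : [set e : {set T} | e \subset V0 & (#|e| == 2) && (e != [set u; v])] =
              [set e : {set T} | e \subset V0 & #|e| == 2] :\ [set u; v].
      apply/setP => e; rewrite !inE; case: (e == [set u; v]) => /=.
        by rewrite !andbF.
      by rewrite andbT.
    have := cardsD1 [set u; v] [set e : {set T} | e \subset V0 & #|e| == 2].
    rewrite cards_draws cV0 !inE subUset !sub1set uV vV cards2 nuv /=.
    have -> : 'C(5, 2) = 10 by []. by move=> h; apply/eqP; rewrite -(eqn_add2l 1) -h.
  have c5 : #|cedges c0| <= 5.
    apply: leq_trans (leq_imset_card _ _) _; apply: leq_trans (card_size _) _.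
    rewrite size_zip size_behead; case: (c0) sc0 => //= a r; rewrite size_cat /= take0 /=.
    slia.
  have := subset_leq_card s1; rewrite c9 => h.
  have := leq_card_setU (cedges c0) I; case => h2 _; move: h h2 c5; slia.
have [xM [xMV xMmax]] : exists xM, xM \in V0 /\ forall y, y \in V0 -> index y p0 <= index xM p0.
  exists [arg max_(x > u in V0) index x p0]; case: arg_maxnP => //.
have [xm [xmV xmmin]] : exists xm, xm \in V0 /\ forall y, y \in V0 -> index xm p0 <= index y p0.
  exists [arg min_(x < u in V0) index x p0]; case: arg_minnP => //.
have ltM : index xM p0 < size p0 by rewrite index_mem V0p0.
set K := [set x in V0 | (nth u p0 (index x p0).+1 \in V0) && ((index x p0).+2 <= size p0)].
have IK : I \subset [set [set x; nth u p0 (index x p0).+1] | x in K].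
  apply/subsetP => e; rewrite inE => /andP[/(pedgesP u) [k [hk ->]] hs].
  apply/imsetP; exists (nth u p0 k); last by rewrite index_uniq // ltnW.
  move: hs; rewrite subUset !sub1set => /andP[h1 h2].
  by rewrite inE h1 index_uniq ?h2 ?hk // ltnW.
have KM : K \subset V0 :\ xM.
  apply/subsetP => x; rewrite !inE => /and3P[xV nV hs]; rewrite xV andbT.
  apply/eqP => exM; subst x; have := xMmax _ nV; rewrite index_uniq //; move: hs; slia.
have KE : K = V0 :\ xM.
  apply/eqP; rewrite eqEcard KM /=.
  have := cardsD1 xM V0; rewrite xMV cV0.
  move=> h; have -> : #|V0 :\ xM| = 4 by move: h; slia.
  apply: leq_trans cI _; apply: leq_trans (subset_leq_card IK) _; exact: leq_imset_card.
have Hnext x : x \in V0 -> x != xM -> nth u p0 (index x p0).+1 \in V0 /\ (index x p0).+2 <= size p0.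
  move=> xV nx; have : x \in K by rewrite KE !inE nx xV.
  by rewrite inE => /and3P[_ -> ->].
have Hint d : index xm p0 + d <= index xM p0 -> nth u p0 (index xm p0 + d) \in V0.
  elim: d => [|d IH] h; first by rewrite addn0 nth_index ?V0p0.
  have yV : nth u p0 (index xm p0 + d) \in V0 by apply: IH; move: h; slia.
  have iy : index (nth u p0 (index xm p0 + d)) p0 = index xm p0 + d.
    rewrite index_uniq //; apply: (leq_ltn_trans _ ltM); apply: leq_trans _ h; by rewrite addnS.
  have ny : nth u p0 (index xm p0 + d) != xM.
    by apply/eqP => e; move: iy; rewrite e; move: h; slia.
  by have [+ _] := Hnext _ yV ny; rewrite iy addnS.
have mM : index xm p0 <= index xM p0 by apply: xMmax.
have Hin k : index xm p0 <= k <= index xM p0 -> nth u p0 k \in V0.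
  case/andP => h1 h2; have := Hint (k - index xm p0); rewrite subnKC //.
  exact.
have Hnb w : w \in c -> w \notin V0 -> exists yu yd,
    [/\ yu \in c, yd \in c, index yu p0 = (index w p0).+1 & (index yd p0).+1 = index w p0].
  move=> wc wV; have [y1 [y2 [n12 e1 e2]]] := cyc_nb uc sc wc.
  have inP0 y : [set w; y] \in cedges c -> [/\ y \in c, y \in p0 &
      ((index w p0).+1 = index y p0 \/ (index y p0).+1 = index w p0)].
    move=> ey; have : [set w; y] \in E by rewrite /E inE ey.
    rewrite hE inE => /orP[/cedges_vert|ep].
      by rewrite subUset sub1set -eV0 (negbTE wV).
    have [_ yp0 hh] := pedges_idx up0 ep.
    split => //; move/cedges_vert: ey; rewrite subUset !sub1set => /andP[_].
    by rewrite inE.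
  have [y1c y1p h1] := inP0 _ e1; have [y2c y2p h2] := inP0 _ e2.
  have ni : index y1 p0 != index y2 p0.
    by apply: contra n12 => /eqP e; apply/eqP; exact: (index_inj u y1p y2p e).
  case: h1 h2 ni => h1 [] h2 ni.
  - by move: ni; rewrite -h1 -h2 eqxx.
  - by exists y1, y2; split.
  - by exists y2, y1; split.
  - have e12 : index y1 p0 = index y2 p0 by apply/eqP; rewrite -eqSS h1 h2.
    by rewrite e12 eqxx in ni.
have SV x : x \in c -> x \in V0.
  move=> w0c; apply/negPn/negP => w0V.
  set W := [set y in c | y \notin V0].
  have w0W : x \in W by rewrite inE w0c w0V.
  have [wM [wMW wMmax]] : exists wM, wM \in W /\ forall y, y \in W -> index y p0 <= index wM p0.
    exists [arg max_(y > x in W) index y p0]; case: arg_maxnP => //.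
  have [wm [wmW wmmin]] : exists wm, wm \in W /\ forall y, y \in W -> index wm p0 <= index y p0.
    exists [arg min_(y < x in W) index y p0]; case: arg_minnP => //.
  have wmM := wMmax _ wmW.
  move: wMW wmW; rewrite !inE => /andP[wMc wMV] /andP[wmc wmV].
  have [yu [_ [yuc _ hu _]]] := Hnb _ wMc wMV.
  have [_ [yd [_ ydc _ hd]]] := Hnb _ wmc wmV.
  have yuV : yu \in V0.
    apply/negPn/negP => yuV; have := wMmax yu; rewrite inE yuc yuV hu ltnn.
    by move=> /(_ isT).
  have ydV : yd \in V0.
    apply/negPn/negP => ydV; have := wmmin yd; rewrite inE ydc ydV -hd ltnn.
    by move=> /(_ isT).
  have u1 := xmmin _ yuV; have u2 := xMmax _ yuV.
  have d1 := xmmin _ ydV; have d2 := xMmax _ ydV.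
  have yup := V0p0 _ yuV; have ydp := V0p0 _ ydV.
  rewrite -index_mem in yup; rewrite -index_mem in ydp.
  have wMp : wM \in p0 by rewrite -index_mem; move: yup; rewrite hu; slia.
  have wmp : wm \in p0.
    by rewrite -index_mem; move: wMp; rewrite -index_mem; move: wmM; slia.
  have c1 : index wM p0 < index xm p0.
    rewrite ltnNge; apply/negP => h; case/negP: wMV.
    rewrite -(nth_index u wMp); apply: Hin; apply/andP; split => //.
    move: u2; rewrite hu; slia.
  have c2 : index xM p0 < index wm p0.
    rewrite ltnNge; apply/negP => h; case/negP: wmV.
    rewrite -(nth_index u wmp); apply: Hin; apply/andP; split => //.
    move: d1; rewrite -hd; slia.
  by move: c1 c2 wmM mM; slia.
have eS : [set x in c] = V0.
  by apply/setP => x; rewrite inE; apply/idP/idP => [/SV|/F2].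
split.
- by rewrite -(card_uniqP uc) -cardsE eS cV0.
- by move=> x /SV /F3.
- by rewrite eS.
Qed.
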